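(* Let $\theta^k\in\mathcal F$ and let $\theta^{k+1}$ be obtained from $\theta^k$ by one iteration of the generalized SMO algorithm (with $\Delta^k>\tau\ge0$). (a) If the block $\alpha$ is selected with pair $(i,j)$, then $\alpha^{k+1}\neq\alpha^k$ and $(i,j)$ is not a violating pair at $\theta^{k+1}$, i.e. it is neither the case that [$i\in I_{up}(\alpha^{k+1})$, $j\in I_{low}(\alpha^{k+1})$ and $\nabla_{\alpha_i}f(\theta^{k+1})<\nabla_{\alpha_j}f(\theta^{k+1})$], nor that [$i\in I_{low}(\alpha^{k+1})$, $j\in I_{up}(\alpha^{k+1})$ and $\nabla_{\alpha_i}f(\theta^{k+1})>\nabla_{\alpha_j}f(\theta^{k+1})$]. The analogous statement holds for the block $\alpha^*$ with pair $(i^*,j^* )$ and index sets $I^*_{up},I^*_{low}$. (b) If the block $\gamma$ is selected with index $u$, then $\nabla_{\gamma_u}f(\theta^{k+1})\ge0$. (c) If the block $\mu$ is selected with index $u$, then $\nabla_{\mu_u}f(\theta^{k+1})=0$.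
   Context: Setup. Let $n,p,k_1,k_2\ge1$, $X\in\mathbb{R}^{n\times p}$ with rows $X_{i:}$, $y\in\mathbb{R}^n$, $C>0$, $\nu\in(0,1]$, $A\in\mathbb{R}^{k_1\times p}$, $b\in\mathbb{R}^{k_1}$, $\Gamma\in\mathbb{R}^{k_2\times p}$, $d\in\mathbb{R}^{k_2}$; $\mathbf e$ is the all-ones vector and $Q=XX^T\in\mathbb{R}^{n\times n}$. Dual variables are $\theta=(\alpha,\alpha^*,\gamma,\mu)\in\mathbb{R}^n\times\mathbb{R}^n\times\mathbb{R}^{k_1}\times\mathbb{R}^{k_2}$. Let $M$ be the $(2n+k_1+k_2)\times p$ matrix with row blocks $X,-X,A,-\Gamma$, $\bar Q=MM^T$, $l=(y,-y,b,-d)$, and $f(\theta)=\frac12\theta^T\bar Q\theta+l^T\theta$; equivalently $f(\theta)=\frac12\|\beta(\theta)\|^2+y^T(\alpha-\alpha^* )+b^T\gamma-d^T\mu$ with $\beta(\theta)=-\sum_{i=1}^n(\alpha_i-\alpha_i^* )X_{i:}-A^T\gamma+\Gamma^T\mu$. The feasible set $\mathcal F$ consists of $\theta$ with $0\le\alpha_i,\alpha_i^*\le C/n$ for all $i$, $\mathbf e^T(\alpha+\alpha^* )\le C\nu$, $\mathbf e^T(\alpha-\alpha^* )=0$, $\gamma_j\ge0$ for all $j$. Generalized SMO algorithm. Assume the rows of $X$ are pairwise distinct and no row of $A$ or $\Gamma$ is zero. Let $I_{up}(\alpha)=\{i:\alpha_i<C/n\}$, $I_{low}(\alpha)=\{i:\alpha_i>0\}$,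 and $I^*_{up},I^*_{low}$ the same sets for $\alpha^*$. Fix $\tau\ge0$ and $\theta^0\in\mathcal F$. At iteration $k$, with all gradients evaluated at $\theta^k$: pick $i\in\arg\min_{I_{up}(\alpha^k)}\nabla_{\alpha_i}f$, $j\in\arg\max_{I_{low}(\alpha^k)}\nabla_{\alpha_j}f$ and set $\Delta_1=\max(\nabla_{\alpha_j}f-\nabla_{\alpha_i}f,0)$ ($\Delta_1=0$ if either set is empty); define $i^*,j^*,\Delta_2$ identically for $\alpha^*$; $\Delta_3=\max(-\min_{s}\nabla_{\gamma_s}f,0)$; $\Delta_4=\max_s|\nabla_{\mu_s}f|$; $\Delta^k=\max(\Delta_1,\Delta_2,\Delta_3,\Delta_4)$. If $\Delta^k\le\tau$ stop; otherwise update the first block (in the order $\alpha,\alpha^*,\gamma,\mu$) whose $\Delta_m$ equals $\Delta^k$, leaving all other coordinates unchanged: Block $\alpha$: $t_q=-\frac{\nabla_{\alpha_i}f-\nabla_{\alpha_j}f}{Q_{ii}+Q_{jj}-2Q_{ij}}$, $I_1=\max(-\alpha_i^k,\alpha_j^k-C/n)$, $I_2=\min(\alpha_j^k,C/n-\alpha_i^k)$, $t^*=\min(\max(I_1,t_q),I_2)$, $\alpha_i^{k+1}=\alpha_i^k+t^*$, $\alpha_j^{k+1}=\alpha_j^k-t^*$. Block $\alpha^*$: the same formulas with $\alpha^*$, $(i^*,j^* )$, $\nabla_{\alpha^*}f$ and the same matrix $Q$. Block $\gamma$: $u\in\arg\min_s\nabla_{\gamma_s}f$, $\gamma_u^{k+1}=\max\big(\gamma_u^k-\nabla_{\gamma_u}f/(AA^T)_{uu},0\big)$.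 Block $\mu$: $u\in\arg\max_s|\nabla_{\mu_s}f|$, $\mu_u^{k+1}=\mu_u^k-\nabla_{\mu_u}f/(\Gamma\Gamma^T)_{uu}$. *)

(* Defs.v *)
(* The scalars range over an arbitrary real field R
   (the paper's setting is R = the real numbers). *)
From HB Require Import structures.
From mathcomp Require Import all_boot all_order all_algebra.
Set Implicit Arguments. Unset Strict Implicit. Unset Printing Implicit Defensive.
Import Order.TTheory GRing.Theory Num.Theory.
Local Open Scope ring_scope.

Record svm_data (R : realFieldType) (n p k1 k2 : nat) := SvmData {
  dX : 'M[R]_(n, p);
  dy : 'cV[R]_n;
  dA : 'M[R]_(k1, p);
  db : 'cV[R]_k1;
  dG : 'M[R]_(k2, p);
  dd : 'cV[R]_k2;
  dC : R;
  dnu : R }.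

Record dual (R : realFieldType) (n k1 k2 : nat) := Dual {
  al : 'cV[R]_n;
  als : 'cV[R]_n;
  ga : 'cV[R]_k1;
  mu : 'cV[R]_k2 }.

Inductive block (n k1 k2 : nat) :=
| BAl of 'I_n & 'I_n
| BAls of 'I_n & 'I_n
| BGa of 'I_k1
| BMu of 'I_k2.

Section SMO.
Variables (R : realFieldType) (n p k1 k2 : nat) (D : svm_data R n p k1 k2).

Local Notation X := (dX D). Local Notation y := (dy D).
Local Notation A := (dA D). Local Notation b := (db D).
Local Notation G := (dG D). Local Notation d := (dd D).
Local Notation C := (dC D). Local Notation nu := (dnu D).
Local Notation theta := (dual R n k1 k2).

Definition beta (th : theta) : 'cV[R]_p :=
  - (X^T *m (al th - als th)) - A^T *m ga th + G^T *m mu th.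

Definition Qm : 'M[R]_n := X *m X^T.

Definition fobj (th : theta) : R :=
  2^-1 * ((beta th)^T *m beta th) ord0 ord0
  + (y^T *m (al th - als th)) ord0 ord0 + (b^T *m ga th) ord0 ord0
  - (d^T *m mu th) ord0 ord0.

(* Block components of the gradient  grad f(theta) = Qbar theta + l,
   with Qbar = M M^T, M = [X; -X; A; -Gamma], l = (y, -y, b, -d);
   since M^T theta = - beta(theta), grad f = l - M beta(theta). *)
Definition grad_al (th : theta) : 'cV[R]_n := y - X *m beta th.
Definition grad_als (th : theta) : 'cV[R]_n := - y + X *m beta th.
Definition grad_ga (th : theta) : 'cV[R]_k1 := b - A *m beta th.
Definition grad_mu (th : theta) : 'cV[R]_k2 := - d + G *m beta th.

Definition feasible (th : theta) : Prop :=
  [/\ forall i, 0 <= al th i ord0 <= C / n%:R,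
      forall i, 0 <= als th i ord0 <= C / n%:R,
      \sum_i (al th i ord0 + als th i ord0) <= C * nu,
      \sum_i (al th i ord0 - als th i ord0) = 0
    & forall s, 0 <= ga th s ord0].

Definition Iup (v : 'cV[R]_n) : pred 'I_n := fun i => v i ord0 < C / n%:R.
Definition Ilow (v : 'cV[R]_n) : pred 'I_n := fun i => 0 < v i ord0.

Definition min_on (I : finType) (P : pred I) (g : I -> R) : option R :=
  match [pick i | P i] with
  | Some i0 => Some (\big[Num.min/g i0]_(i | P i) g i)
  | None => None
  end.
Definition max_on (I : finType) (P : pred I) (g : I -> R) : option R :=
  match [pick i | P i] with
  | Some i0 => Some (\big[Num.max/g i0]_(i | P i) g i)
  | None => None
  end.

Definition is_argmin (I : finType) (P : pred I) (g : I -> R) (i : I) : Prop :=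
  P i /\ forall i', P i' -> g i <= g i'.
Definition is_argmax (I : finType) (P : pred I) (g : I -> R) (i : I) : Prop :=
  P i /\ forall i', P i' -> g i' <= g i.

Definition Delta_pair (v g : 'cV[R]_n) : R :=
  match min_on (Iup v) (fun i => g i ord0), max_on (Ilow v) (fun j => g j ord0) with
  | Some m, Some M => Num.max (M - m) 0
  | _, _ => 0
  end.

Definition Delta1 (th : theta) : R := Delta_pair (al th) (grad_al th).
Definition Delta2 (th : theta) : R := Delta_pair (als th) (grad_als th).
Definition Delta3 (th : theta) : R :=
  match min_on predT (fun s => grad_ga th s ord0) with
  | Some m => Num.max (- m) 0
  | None => 0
  end.
Definition Delta4 (th : theta) : R :=
  \big[Num.max/0]_(s < k2) `|grad_mu th s ord0|.
Definition Delta (th : theta) : R :=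
  Num.max (Num.max (Delta1 th) (Delta2 th)) (Num.max (Delta3 th) (Delta4 th)).

Definition pair_update (v g : 'cV[R]_n) (i j : 'I_n) : 'cV[R]_n :=
  let tq := - (g i ord0 - g j ord0) / (Qm i i + Qm j j - 2 * Qm i j) in
  let I1 := Num.max (- v i ord0) (v j ord0 - C / n%:R) in
  let I2 := Num.min (v j ord0) (C / n%:R - v i ord0) in
  let ts := Num.min (Num.max I1 tq) I2 in
  \col_l (if l == i then v i ord0 + ts
          else if l == j then v j ord0 - ts else v l ord0).

(* One iteration of generalized SMO from th to th', not stopping
   (Delta > tau), selecting block c (the first block attaining Delta). *)
Definition smo_step (tau : R) (th : theta) (c : block n k1 k2) (th' : theta) : Prop :=
  tau < Delta th /\
  match c with
  | BAl i j =>
      [/\ Delta1 th = Delta th,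
          is_argmin (Iup (al th)) (fun l => grad_al th l ord0) i,
          is_argmax (Ilow (al th)) (fun l => grad_al th l ord0) j
        & th' = Dual (pair_update (al th) (grad_al th) i j) (als th) (ga th) (mu th)]
  | BAls i j =>
      [/\ Delta1 th <> Delta th, Delta2 th = Delta th,
          is_argmin (Iup (als th)) (fun l => grad_als th l ord0) i,
          is_argmax (Ilow (als th)) (fun l => grad_als th l ord0) j
        & th' = Dual (al th) (pair_update (als th) (grad_als th) i j) (ga th) (mu th)]
  | BGa u =>
      [/\ Delta1 th <> Delta th, Delta2 th <> Delta th, Delta3 th = Delta th,
          is_argmin predT (fun s => grad_ga th s ord0) u
        & th' = Dual (al th) (als th)
                  (\col_s (if s == u then
                             Num.max (ga th u ord0 - grad_ga th u ord0 / (A *m A^T) u u) 0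
                           else ga th s ord0))
                  (mu th)]
  | BMu u =>
      [/\ [/\ Delta1 th <> Delta th, Delta2 th <> Delta th & Delta3 th <> Delta th],
          Delta4 th = Delta th,
          is_argmax predT (fun s => `|grad_mu th s ord0|) u
        & th' = Dual (al th) (als th) (ga th)
                  (\col_s (if s == u then
                             mu th u ord0 - grad_mu th u ord0 / (G *m G^T) u u
                           else mu th s ord0))]
  end.

Definition violating (v g : 'cV[R]_n) (i j : 'I_n) : Prop :=
  (Iup v i /\ Ilow v j /\ g i ord0 < g j ord0) \/
  (Ilow v i /\ Iup v j /\ g j ord0 < g i ord0).

End SMO.

(* Main.v *)
Require Import Defs.
From HB Require Import structures.
From mathcomp Require Import all_boot all_order all_algebra.
From mathcomp Require Import ring lra.
Import Order.TTheory GRing.Theory Num.Theory.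
Local Open Scope ring_scope.

Lemma sumsq_gt0 (R : realFieldType) (p : nat) (w : 'rV[R]_p) :
  w != 0 -> 0 < \sum_k w 0 k ^+ 2.
Proof.
move=> wn0; rewrite lt_def sumr_ge0 ?andbT; last by move=> k _; rewrite sqr_ge0.
apply/negP => /eqP H; case/negP: wn0; apply/eqP; apply/rowP => k.
have Hk : w 0 k ^+ 2 = 0.
  by apply: (psumr_eq0P _ H) => // i _; apply: sqr_ge0.
move/eqP: Hk; rewrite sqrf_eq0 => /eqP ->; by rewrite mxE.
Qed.

Section Pair.
Variables (R : realFieldType) (n p k1 k2 : nat) (D : svm_data R n p k1 k2).
Local Notation C := (dC D).

Lemma Qm_sym (a b : 'I_n) : Qm D a b = Qm D b a.
Proof. by rewrite /Qm !mxE; apply: eq_bigr => k _; rewrite !mxE mulrC. Qed.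

Lemma pair_ok (v g g' : 'cV[R]_n) (i j : 'I_n) :
  (forall l, 0 <= v l ord0 <= C / n%:R) ->
  Iup D v i -> Ilow v j -> g i ord0 < g j ord0 ->
  0 < Qm D i i + Qm D j j - 2 * Qm D i j ->
  g' = g + Qm D *m (pair_update D v g i j - v) ->
  pair_update D v g i j <> v /\ ~ violating D (pair_update D v g i j) g' i j.
Proof.
move=> vb vi vj gij eta0 g'E.
have ij : i != j by apply/eqP => e; rewrite e ltxx in gij.
rewrite /Iup /Ilow in vi vj.
pose eta := Qm D i i + Qm D j j - 2 * Qm D i j.
pose tq := - (g i ord0 - g j ord0) / eta.
pose I1 := Num.max (- v i ord0) (v j ord0 - C / n%:R).
pose I2 := Num.min (v j ord0) (C / n%:R - v i ord0).
pose ts := Num.min (Num.max I1 tq) I2.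
have Pu : pair_update D v g i j = \col_l (if l == i then v i ord0 + ts
          else if l == j then v j ord0 - ts else v l ord0) by [].
have Hv : pair_update D v g i j = v + ts *: (delta_mx i 0 - delta_mx j 0).
  rewrite Pu; apply/matrixP => l m; rewrite (ord1 m) !mxE /= !eqxx !andbT.
  case: (eqVneq l i) => [->|li]; first by rewrite (negbTE ij) /=; ring.
  case: (eqVneq l j) => [->|lj] /=; first by ring.
  by ring.
have vi' : pair_update D v g i j i ord0 = v i ord0 + ts by rewrite Pu mxE eqxx.
have vj' : pair_update D v g i j j ord0 = v j ord0 - ts.
  by rewrite Pu mxE eq_sym (negbTE ij) eqxx.
have Hg : forall r, g' r ord0 = g r ord0 + ts * (Qm D r i - Qm D r j).
  move=> r; rewrite g'E Hv addrAC subrr add0r -scalemxAr mulmxBr -!colE.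
  by rewrite !mxE.
have gd : g' i ord0 - g' j ord0 = g i ord0 - g j ord0 + ts * eta.
  rewrite !Hg /eta (Qm_sym j i); ring.
have tq0 : 0 < tq by rewrite /tq divr_gt0 // oppr_gt0 subr_lt0.
have I10 : I1 <= 0.
  rewrite /I1 ge_max oppr_le0 subr_le0; case/andP: (vb i) => -> _.
  by case/andP: (vb j).
have I20 : 0 < I2 by rewrite /I2 lt_min vj subr_gt0 vi.
have tsE : ts = Num.min tq I2 by rewrite /ts (max_r (le_trans I10 (ltW tq0))).
have ts0 : 0 < ts by rewrite tsE lt_min tq0 I20.
split.
  move=> e; move: vi'; rewrite e => H; lra.
have tqe : g i ord0 - g j ord0 + tq * eta = 0.
  rewrite /tq divfK; first ring. by rewrite gt_eqF.
case: (leP tq I2) => h.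
  have : g' i ord0 = g' j ord0.
    by apply/eqP; rewrite -subr_eq0 gd tsE (min_l h) tqe.
  by rewrite /violating => ->; rewrite ltxx; case => [[_ [_ //]]|[_ [_ //]]].
have tsI : ts = I2 by rewrite tsE (min_r (ltW h)).
have glt : g' i ord0 < g' j ord0.
  rewrite -subr_lt0 gd -tqe ltrD2l tsI; by rewrite ltr_pM2r.
rewrite /violating /Iup /Ilow vi' vj' tsI; case.
  case=> h1 [h2 _]; have : I2 < I2.
    by rewrite {2}/I2 lt_min -subr_gt0 h2 ltrBrDl.
  by rewrite ltxx.
by case=> _ [_ h3]; move: (lt_trans h3 glt); rewrite ltxx.
Qed.

Lemma delta_pair_lt (v g : 'cV[R]_n) (i j : 'I_n) :
  0 < Delta_pair D v g ->
  is_argmin (Iup D v) (fun l => g l ord0) i ->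
  is_argmax (Ilow v) (fun l => g l ord0) j -> g i ord0 < g j ord0.
Proof.
rewrite /Delta_pair /min_on /max_on.
case: pickP => [i0 Pi0|_]; last by rewrite ltxx.
case: pickP => [j0 Pj0|_]; last by rewrite ltxx.
move=> H [Pi Hi] [Pj Hj].
have hm : g i ord0 <= \big[Num.min/g i0 ord0]_(l | Iup D v l) g l ord0.
  apply: (big_ind (fun x => g i ord0 <= x)); first exact: Hi.
    by move=> x y hx hy; rewrite le_min hx hy.
  by move=> l Pl; apply: Hi.
have hM : \big[Num.max/g j0 ord0]_(l | Ilow v l) g l ord0 <= g j ord0.
  apply: (big_ind (fun x => x <= g j ord0)); first exact: Hj.
    by move=> x y hx hy; rewrite ge_max hx hy.
  by move=> l Pl; apply: Hj.
move: H; rewrite lt_max ltxx orbF subr_gt0 => H.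
exact: (le_lt_trans hm (lt_le_trans H hM)).
Qed.

Lemma eta_gt0 (i j : 'I_n) : row i (dX D) != row j (dX D) ->
  0 < Qm D i i + Qm D j j - 2 * Qm D i j.
Proof.
move=> rij.
have -> : Qm D i i + Qm D j j - 2 * Qm D i j =
    \sum_k (row i (dX D) - row j (dX D)) 0 k ^+ 2.
  rewrite /Qm !mxE mulr_sumr -big_split -sumrB /=.
  by apply: eq_bigr => k _; rewrite !mxE; ring.
by apply: sumsq_gt0; rewrite subr_eq0.
Qed.

Lemma diag_gt0 (m : nat) (M : 'M[R]_(m, p)) (u : 'I_m) : row u M != 0 ->
  0 < (M *m M^T) u u.
Proof.
move=> ru.
have -> : (M *m M^T) u u = \sum_k (row u M) 0 k ^+ 2.
  by rewrite !mxE; apply: eq_bigr => k _; rewrite !mxE expr2.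
exact: sumsq_gt0.
Qed.

End Pair.

Section Lin.
Variables (R : realFieldType) (m : nat).
Implicit Types a b c d e : 'cV[R]_m.
Lemma cv3 a b c : a - (b - c) = (a - b) + c.
Proof. by apply/matrixP => r s; rewrite !mxE; ring. Qed.
Lemma cv3' a b c : - a + (b + c) = (- a + b) + c.
Proof. by apply/matrixP => r s; rewrite !mxE; ring. Qed.
Lemma bal a b c d e : -(a - b) - d + e = (-(c - b) - d + e) - (a - c).
Proof. by apply/matrixP => r s; rewrite !mxE; ring. Qed.
Lemma bals a b c d e : -(c - a) - d + e = (-(c - b) - d + e) + (a - b).
Proof. by apply/matrixP => r s; rewrite !mxE; ring. Qed.
Lemma bga a b c d : -a - b + d = (-a - c + d) - (b - c).
Proof. by apply/matrixP => r s; rewrite !mxE; ring. Qed.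
Lemma bmu a b c d : -a - b + d = (-a - b + c) + (d - c).
Proof. by apply/matrixP => r s; rewrite !mxE; ring. Qed.
End Lin.


Theorem proposition3p1 (R : realFieldType) (n p k1 k2 : nat)
  (D : svm_data R n p k1 k2) (tau : R) (th : dual R n k1 k2)
  (c : block n k1 k2) (th' : dual R n k1 k2) :
  (0 < n)%N -> (0 < p)%N -> (0 < k1)%N -> (0 < k2)%N ->
  0 < dC D -> 0 < dnu D <= 1 ->
  (forall i j : 'I_n, row i (dX D) = row j (dX D) -> i = j) ->
  (forall s : 'I_k1, row s (dA D) != 0) ->
  (forall s : 'I_k2, row s (dG D) != 0) ->
  0 <= tau ->
  feasible D th ->
  smo_step D tau th c th' ->
  match c with
  | BAl i j => al th' <> al th /\ ~ violating D (al th') (grad_al D th') i j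
  | BAls i j => als th' <> als th /\ ~ violating D (als th') (grad_als D th') i j
  | BGa u => 0 <= grad_ga D th' u ord0
  | BMu u => grad_mu D th' u ord0 = 0
  end.
Proof.
move=> _ _ _ _ C0 _ Xinj Anz Gnz tau0 [fa fas _ _ fg] [Dlt].
have D0 : 0 < Delta D th by apply: le_lt_trans Dlt.
have rowsX : forall i j : 'I_n, i != j -> row i (dX D) != row j (dX D).
  by move=> i j ij; apply/eqP => /Xinj /eqP; rewrite (negbTE ij).
case: c => [i j|i j|u|u].
- case=> D1 Hi Hj ->.
  have gij : grad_al D th i ord0 < grad_al D th j ord0.
    by apply: delta_pair_lt Hi Hj; rewrite /Delta1 in D1; rewrite D1.
  have ij : i != j by apply/eqP => e; rewrite e ltxx in gij.
  apply: pair_ok => //; first by case: Hi.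
    by case: Hj.
    exact: eta_gt0 (rowsX _ _ ij).
  set v' := pair_update _ _ _ _ _.
  have bE : beta D (Dual v' (als th) (ga th) (mu th)) =
            beta D th - (dX D)^T *m (v' - al th).
    by rewrite /beta /= !mulmxBr; apply: bal.
  by rewrite /grad_al bE mulmxBr mulmxA cv3.
- case=> _ D2 Hi Hj ->.
  have gij : grad_als D th i ord0 < grad_als D th j ord0.
    by apply: delta_pair_lt Hi Hj; rewrite /Delta2 in D2; rewrite D2.
  have ij : i != j by apply/eqP => e; rewrite e ltxx in gij.
  apply: pair_ok => //; first by case: Hi.
    by case: Hj.
    exact: eta_gt0 (rowsX _ _ ij).
  set v' := pair_update _ _ _ _ _.
  have bE : beta D (Dual (al th) v' (ga th) (mu th)) =
            beta D th + (dX D)^T *m (v' - als th).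
    by rewrite /beta /= !mulmxBr; apply: bals.
  by rewrite /grad_als bE mulmxDr mulmxA addrA.
- case=> _ _ _ _ ->.
  set a := (dA D *m (dA D)^T) u u.
  have a0 : 0 < a by apply: diag_gt0.
  set g := grad_ga D th u ord0.
  set del := Num.max (ga th u ord0 - g / a) 0 - ga th u ord0.
  set w := \col_s _.
  have wE : w = ga th + del *: delta_mx u 0.
    apply/matrixP => l q; rewrite (ord1 q) !mxE /= !eqxx !andbT.
    by case: (eqVneq l u) => [->|lu] /=; rewrite /del /g; ring.
  have bE : beta D (Dual (al th) (als th) w (mu th)) =
            beta D th - (dA D)^T *m (w - ga th).
    by rewrite /beta /= !mulmxBr; apply: bga.
  have gE : grad_ga D (Dual (al th) (als th) w (mu th)) u ord0 = g + del * a.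
    rewrite /grad_ga bE mulmxBr mulmxA cv3 wE [ga th + _ - _]addrAC subrr add0r.
    by rewrite -scalemxAr -colE /g /a /grad_ga !mxE.
  rewrite gE.
  have : - g / a <= del.
    rewrite /del lerBrDr le_max; apply/orP; left; rewrite mulNr addrC.
    by [].
  have e : - g / a * a = - g by field; rewrite gt_eqF.
  by rewrite -(ler_pM2r a0) e => h; lra.
- case=> _ _ _ ->.
  set a := (dG D *m (dG D)^T) u u.
  have a0 : 0 < a by apply: diag_gt0.
  set g := grad_mu D th u ord0.
  set w := \col_s _.
  have wE : w = mu th + (- g / a) *: delta_mx u 0.
    apply/matrixP => l q; rewrite (ord1 q) !mxE /= !eqxx !andbT.
    by case: (eqVneq l u) => [->|lu] /=; rewrite /g; ring.
  have bE : beta D (Dual (al th) (als th) (ga th) w) =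
            beta D th + (dG D)^T *m (w - mu th).
    by rewrite /beta /= !mulmxBr; apply: bmu.
  rewrite /grad_mu bE mulmxDr mulmxA addrA wE [mu th + _ - _]addrAC subrr add0r.
  rewrite -scalemxAr -colE.
  have -> : (- dd D + dG D *m beta D th + (- g / a) *: col u (dG D *m (dG D)^T)) u ord0
      = g + (- g / a) * a by rewrite /g /a /grad_mu !mxE.
  by field; rewrite gt_eqF.
Qed.
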